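(* Let $(G_n)_{n\in\mathbb N}$ be a sequence of groups, let $A$ be a finite subset of $\mathbb N$, and let $(P_n)_{n\in\mathbb N}$ be a partition of $\mathbb N\setminus A$ into finite sets. Then $\mathcal A(G_n)\cong\mathcal A( *_{i\in P_n}G_i)$, the archipelago group of the sequence $( *_{i\in P_n}G_i)_{n\in\mathbb N}$.
   Context: For a sequence of groups $(G_n)_{n\in\mathbb N}$, an infinite word is a map $w:L\to\bigsqcup_n (G_n\setminus\{1\})$ from a countable linearly ordered set $L$ such that $w^{-1}(G_n)$ is finite for every $n$. Two infinite words are equivalent if for every $m$ their restrictions to the letters from $G_1,\dots,G_m$ represent the same element of $G_1*\cdots*G_m$. The topologist's product $\circledast_n G_n$ is the group of equivalence classes, with multiplication induced by concatenation and inversion by reversing the order and inverting each letter. The free product $*_n G_n$ is the subgroup of classes of finite words. The archipelago group is $\mathcal A(G_n):=\circledast_n G_n/\langle\langle *_n G_n\rangle\rangle$ (quotient by normal closure). *)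

(* Defs.v *)
From Stdlib Require Import List Arith Relations Sorting.Sorted.
Import ListNotations.

(** A group presented by its operations, with an equivalence [geq]
   (for the input groups this is required to be Leibniz equality). *)
Record GrpOps := mkGrp {
  gcar : Type;
  geq : gcar -> gcar -> Prop;
  gmul : gcar -> gcar -> gcar;
  ginv : gcar -> gcar;
  gone : gcar }.
Arguments geq g _ _ : clear implicits.
Arguments gmul g _ _ : clear implicits.
Arguments ginv g _ : clear implicits.
Arguments gone g : clear implicits.

Definition is_group (G : GrpOps) : Prop :=
  (forall x y, geq G x y <-> x = y) /\
  (forall x y z, gmul G x (gmul G y z) = gmul G (gmul G x y) z) /\
  (forall x, gmul G (gone G) x = x) /\ (forall x, gmul G x (gone G) = x) /\
  (forall x, gmul G (ginv G x) x = gone G) /\ (forall x, gmul G x (ginv G x) = gone G).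

Section FreeProd.
Variables (I : Type) (F : I -> GrpOps).
Definition fletter := {i : I & gcar (F i)}.
Inductive fp_step : list fletter -> list fletter -> Prop :=
| fp_merge : forall w w' i (g h : gcar (F i)),
    fp_step (w ++ existT _ i g :: existT _ i h :: w')
            (w ++ existT _ i (gmul (F i) g h) :: w')
| fp_del : forall w w' i (g : gcar (F i)), geq (F i) g (gone (F i)) ->
    fp_step (w ++ existT _ i g :: w') (w ++ w')
| fp_repl : forall w w' i (g h : gcar (F i)), geq (F i) g h ->
    fp_step (w ++ existT _ i g :: w') (w ++ existT _ i h :: w').
Definition fp_eq := clos_refl_sym_trans _ fp_step.
Definition fletter_inv (x : fletter) : fletter :=
  let (i, g) := x in existT _ i (ginv (F i) g).
Definition FreeProduct : GrpOps :=
  {| gcar := list fletter; geq := fp_eq; gmul := @app fletter;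
     ginv := fun w => rev (map fletter_inv w); gone := [] |}.
End FreeProd.

Definition Letter (G : nat -> GrpOps) := {n : nat & gcar (G n)}.

Record IWord (G : nat -> GrpOps) := mkIW {
  iL : Type;
  ilt : iL -> iL -> Prop;
  iw : iL -> Letter G }.
Arguments iL {G} i.
Arguments ilt {G} i _ _.
Arguments iw {G} i _.

Definition iw_wf {G} (u : IWord G) : Prop :=
  (forall x, ~ ilt u x x) /\
  (forall x y z, ilt u x y -> ilt u y z -> ilt u x z) /\
  (forall x y, ilt u x y \/ x = y \/ ilt u y x) /\
  (exists f : iL u -> nat, forall x y, f x = f y -> x = y) /\
  (forall n, exists l : list (iL u), forall x, projT1 (iw u x) = n -> In x l) /\
  (forall x, ~ geq (G (projT1 (iw u x))) (projT2 (iw u x)) (gone _)).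

Definition FP_first (G : nat -> GrpOps) (m : nat) : GrpOps :=
  FreeProduct {i : nat | i < m} (fun i => G (proj1_sig i)).

Definition restr_letter {G} (m : nat) (x : Letter G)
  : list (fletter {i : nat | i < m} (fun i => G (proj1_sig i))) :=
  let (n, g) := x in
  match Compare_dec.lt_dec n m with
  | left p => [existT (fun i : {i : nat | i < m} => gcar (G (proj1_sig i)))
                      (exist _ n p) g]
  | right _ => []
  end.

Definition restr_enum {G} (u : IWord G) (m : nat) (l : list (iL u)) : Prop :=
  StronglySorted (ilt u) l /\ (forall x, In x l <-> projT1 (iw u x) < m).

Definition restr_word {G} (u : IWord G) (m : nat) (l : list (iL u)) :=
  flat_map (fun x => restr_letter m (iw u x)) l.

Definition tp_eq {G} (u v : IWord G) : Prop :=
  forall m l1 l2, restr_enum u m l1 -> restr_enum v m l2 ->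
    geq (FP_first G m) (restr_word u m l1) (restr_word v m l2).

Definition tp_mul {G} (u v : IWord G) : IWord G :=
  {| iL := (iL u + iL v)%type;
     ilt := fun a b => match a, b with
                       | inl x, inl y => ilt u x y
                       | inl _, inr _ => True
                       | inr _, inl _ => False
                       | inr x, inr y => ilt v x y end;
     iw := fun a => match a with inl x => iw u x | inr y => iw v y end |}.

Definition tp_inv {G} (u : IWord G) : IWord G :=
  {| iL := iL u;
     ilt := fun a b => ilt u b a;
     iw := fun x => let (n, g) := iw u x in existT _ n (ginv (G n) g) |}.

Definition finite_word {G} (u : IWord G) : Prop :=
  exists l : list (iL u), forall x, In x l.

(** Normal closure in the topologist's product of (the classes of) the finite words. *)
Inductive NC {G} : IWord G -> Prop :=
| NC_fin : forall u, iw_wf u -> finite_word u -> NC u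
| NC_eq : forall u v, NC u -> iw_wf v -> tp_eq u v -> NC v
| NC_mul : forall u v, NC u -> NC v -> NC (tp_mul u v)
| NC_inv : forall u, NC u -> NC (tp_inv u)
| NC_conj : forall u g, NC u -> iw_wf g -> NC (tp_mul (tp_mul g u) (tp_inv g)).

Definition arch_eq {G} (u v : IWord G) : Prop := NC (tp_mul u (tp_inv v)).

Definition arch_iso (G H : nat -> GrpOps) : Prop :=
  exists f : IWord G -> IWord H,
    (forall u, iw_wf u -> iw_wf (f u)) /\
    (forall u v, iw_wf u -> iw_wf v -> (arch_eq u v <-> arch_eq (f u) (f v))) /\
    (forall u v, iw_wf u -> iw_wf v ->
        arch_eq (f (tp_mul u v)) (tp_mul (f u) (f v))) /\
    (forall v, iw_wf v -> exists u, iw_wf u /\ arch_eq (f u) v).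

Definition block_prod (G : nat -> GrpOps) (P : nat -> nat -> Prop) (n : nat) : GrpOps :=
  FreeProduct {i : nat | P n i} (fun i => G (proj1_sig i)).

(* Main.v *)
Require Import Defs.
From Stdlib Require Import List Arith Lia Relations Sorting.Sorted Classical ClassicalEpsilon ProofIrrelevance Eqdep_dec Cantor.
Import ListNotations.

Module P1.

Section FP.
Variables (I : Type) (F : I -> GrpOps).
Notation fl := (fletter I F).
Notation feq := (fp_eq I F).

Lemma feq_refl w : feq w w. Proof. apply rst_refl. Qed.
Lemma feq_sym w w' : feq w w' -> feq w' w. Proof. apply rst_sym. Qed.
Lemma feq_trans w1 w2 w3 : feq w1 w2 -> feq w2 w3 -> feq w1 w3. Proof. apply rst_trans. Qed.
Lemma feq_step w w' : fp_step I F w w' -> feq w w'. Proof. apply rst_step. Qed.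

Lemma step_ctx w w' : fp_step I F w w' -> forall a b, fp_step I F (a ++ w ++ b) (a ++ w' ++ b).
Proof.
  intros [w0 w1 i g h|w0 w1 i g Hg|w0 w1 i g h Hg] a b.
  - pose proof (fp_merge I F (a ++ w0) (w1 ++ b) i g h) as H.
    rewrite <- !app_assoc in *; simpl in *; exact H.
  - pose proof (fp_del I F (a ++ w0) (w1 ++ b) i g Hg) as H.
    rewrite <- !app_assoc in *; simpl in *; exact H.
  - pose proof (fp_repl I F (a ++ w0) (w1 ++ b) i g h Hg) as H.
    rewrite <- !app_assoc in *; simpl in *; exact H.
Qed.

Lemma feq_ctx w w' a b : feq w w' -> feq (a ++ w ++ b) (a ++ w' ++ b).
Proof.
  induction 1.
  - apply feq_step, step_ctx; auto.
  - apply feq_refl.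
  - apply feq_sym; auto.
  - eapply feq_trans; eauto.
Qed.

Lemma feq_app w1 w1' w2 w2' : feq w1 w1' -> feq w2 w2' -> feq (w1 ++ w2) (w1' ++ w2').
Proof.
  intros H1 H2. apply feq_trans with (w1' ++ w2).
  - pose proof (feq_ctx w1 w1' [] w2 H1); simpl in *; auto.
  - pose proof (feq_ctx w2 w2' w1' [] H2); rewrite !app_nil_r in *; auto.
Qed.

Lemma feq_merge1 i g h : feq [existT _ i g; existT _ i h] [existT _ i (gmul (F i) g h)].
Proof. apply feq_step. apply (fp_merge I F [] [] i g h). Qed.
Lemma feq_del1 i g : geq (F i) g (gone (F i)) -> feq [existT _ i g] [].
Proof. intros H. apply feq_step. apply (fp_del I F [] [] i g H). Qed.
Lemma feq_repl1 i g h : geq (F i) g h -> feq [existT _ i g] [existT _ i h].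
Proof. intros H. apply feq_step. apply (fp_repl I F [] [] i g h H). Qed.

Definition finv (w : list fl) : list fl := rev (map (fletter_inv I F) w).
Lemma finv_app a b : finv (a ++ b) = finv b ++ finv a.
Proof. unfold finv. rewrite map_app, rev_app_distr. auto. Qed.
Lemma finv_cons x a : finv (x :: a) = finv a ++ [fletter_inv I F x].
Proof. reflexivity. Qed.

End FP.
Section Hom.
Variables (I : Type) (F : I -> GrpOps).
Notation fl := (fletter I F).
Notation feq := (fp_eq I F).
Variables (J : Type) (F' : J -> GrpOps) (th : fl -> list (fletter J F')).
Hypothesis th_merge : forall i g h, fp_eq J F' (th (existT _ i (gmul (F i) g h))) (th (existT _ i g) ++ th (existT _ i h)).
Hypothesis th_del : forall i g, geq (F i) g (gone (F i)) -> fp_eq J F' (th (existT _ i g)) [].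
Hypothesis th_repl : forall i g h, geq (F i) g h -> fp_eq J F' (th (existT _ i g)) (th (existT _ i h)).
Lemma hom_feq w w' : feq w w' -> fp_eq J F' (flat_map th w) (flat_map th w').
Proof.
  induction 1 as [w w' Hs| | |].
  - destruct Hs as [w0 w1 i g h|w0 w1 i g Hg|w0 w1 i g h Hg]; rewrite !flat_map_app; simpl.
    + apply (feq_app J F'). apply (feq_refl J F'). rewrite app_assoc. apply (feq_app J F'); [|apply (feq_refl J F')].
      apply (feq_sym J F'); auto.
    + apply (feq_app J F'). apply (feq_refl J F'). pose proof (th_del i g Hg).
      change (flat_map th w1) with ([] ++ flat_map th w1) at 2.
      apply (feq_app J F'); auto. apply (feq_refl J F').
    + apply (feq_app J F'). apply (feq_refl J F'). apply (feq_app J F'); auto. apply (feq_refl J F').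
  - apply (feq_refl J F').
  - apply (feq_sym J F'); auto.
  - eapply (feq_trans J F'); eauto.
Qed.
End Hom.

Definition WG (K : GrpOps) : Prop :=
  (forall x y, geq K x y -> geq K y x) /\
  (forall g h, geq K (gmul K (ginv K h) (ginv K g)) (ginv K (gmul K g h))) /\
  (forall g, geq K g (gone K) -> geq K (ginv K g) (gone K)) /\
  (forall g h, geq K g h -> geq K (ginv K g) (ginv K h)) /\
  (forall g, geq K (gmul K g (ginv K g)) (gone K)) /\
  (forall g, geq K (ginv K (ginv K g)) g).

Lemma WG_sym K : WG K -> forall x y, geq K x y -> geq K y x. Proof. intros H; apply H. Qed.
Lemma WG_invmul K : WG K -> forall g h, geq K (gmul K (ginv K h) (ginv K g)) (ginv K (gmul K g h)). Proof. intros H; apply H. Qed.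
Lemma WG_del K : WG K -> forall g, geq K g (gone K) -> geq K (ginv K g) (gone K). Proof. intros H; apply H. Qed.
Lemma WG_repl K : WG K -> forall g h, geq K g h -> geq K (ginv K g) (ginv K h). Proof. intros H; apply H. Qed.
Lemma WG_rinv K : WG K -> forall g, geq K (gmul K g (ginv K g)) (gone K). Proof. intros H; apply H. Qed.
Lemma WG_invinv K : WG K -> forall g, geq K (ginv K (ginv K g)) g. Proof. intros H; apply H. Qed.

Section FPWG.
Variables (I : Type) (F : I -> GrpOps).
Hypothesis HW : forall i, WG (F i).
Notation feq := (fp_eq I F).

Lemma finv_feq w w' : feq w w' -> feq (finv I F w) (finv I F w').
Proof.
  induction 1 as [w w' Hs| | |].
  - destruct Hs as [w0 w1 i g h|w0 w1 i g Hg|w0 w1 i g h Hg]; rewrite !finv_app, !finv_cons; simpl.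
    + pose proof (feq_ctx I F _ _ (finv I F w1) (finv I F w0) (feq_trans I F _ _ _ (feq_merge1 I F i (ginv (F i) h) (ginv (F i) g)) (feq_repl1 I F i _ _ (WG_invmul _ (HW i) g h)))) as H. simpl in H. rewrite <- !app_assoc; simpl; exact H.
    + pose proof (feq_ctx I F _ _ (finv I F w1) (finv I F w0) (feq_del1 I F i _ (WG_del _ (HW i) g Hg))) as H. simpl in H. rewrite <- !app_assoc; simpl; exact H.
    + pose proof (feq_ctx I F _ _ (finv I F w1) (finv I F w0) (feq_repl1 I F i _ _ (WG_repl _ (HW i) g h Hg))) as H. simpl in H. rewrite <- !app_assoc; simpl; exact H.
  - apply feq_refl.
  - apply feq_sym; auto.
  - eapply feq_trans; eauto.
Qed.

Lemma rinv_feq w : feq (w ++ finv I F w) [].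
Proof.
  induction w as [|[i g] w IH]; simpl. apply feq_refl.
  rewrite finv_cons. 
  apply feq_trans with ([existT _ i g] ++ [] ++ [fletter_inv I F (existT _ i g)]).
  - rewrite app_assoc. pose proof (feq_ctx I F _ _ [existT _ i g] [fletter_inv I F (existT _ i g)] IH).
    simpl in *. rewrite <- app_assoc in H. rewrite <- app_assoc. exact H.
  - simpl. eapply feq_trans. apply (feq_merge1 I F i). apply feq_del1. apply (HW i).
Qed.

Lemma finv_finv w : feq (finv I F (finv I F w)) w.
Proof.
  induction w as [|[i g] w IH]; simpl. apply feq_refl.
  rewrite finv_cons, finv_app. simpl.
  apply (feq_app I F [_] [_]); auto. apply feq_repl1. apply (HW i).
Qed.

Lemma linv_feq w : feq (finv I F w ++ w) [].
Proof.
  eapply feq_trans. apply feq_app. apply feq_refl. apply feq_sym, finv_finv.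
  apply rinv_feq.
Qed.

Lemma WG_FP : WG (FreeProduct I F).
Proof.
  split; [|split; [|split; [|split; [|split]]]].
  - intros; apply feq_sym; auto.
  - intros g h; change (feq (finv I F h ++ finv I F g) (finv I F (g ++ h))); rewrite finv_app; apply feq_refl.
  - intros g H. apply finv_feq in H. exact H.
  - intros; apply finv_feq; auto.
  - apply rinv_feq.
  - apply finv_finv.
Qed.
End FPWG.

Section GroupFacts.
Variable K : GrpOps.
Hypothesis HK : is_group K.
Notation "x * y" := (gmul K x y).
Notation "x ^-1" := (ginv K x) (at level 2).
Notation e := (gone K).

Lemma grp_cancel_l a x y : a * x = a * y -> x = y.
Proof.
  destruct HK as (_&As&L1&R1&Li&Ri). intros H.
  rewrite <- (L1 x), <- (L1 y), <- (Li a), <- !As, H. auto.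
Qed.
Lemma grp_inv_inv x : (x^-1)^-1 = x.
Proof.
  destruct HK as (_&As&L1&R1&Li&Ri). apply (grp_cancel_l (x^-1)). rewrite Li, Ri; auto.
Qed.
Lemma grp_inv_mul g h : h^-1 * g^-1 = (g * h)^-1.
Proof.
  destruct HK as (_&As&L1&R1&Li&Ri). apply (grp_cancel_l (g * h)).
  rewrite Ri, As, <- (As g h), Ri, R1, Ri. auto.
Qed.
Lemma grp_inv_one : e^-1 = e.
Proof. destruct HK as (_&As&L1&R1&Li&Ri). rewrite <- (L1 (e^-1)), Ri. auto. Qed.
Lemma group_WG : WG K.
Proof.
  pose proof HK as (Eq&As&L1&R1&Li&Ri).
  split; [|split; [|split; [|split; [|split]]]]; intros; apply Eq.
  - apply Eq in H. auto.
  - apply grp_inv_mul.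
  - apply Eq in H. subst. apply grp_inv_one.
  - apply Eq in H. subst. auto.
  - apply Ri.
  - apply grp_inv_inv.
Qed.
End GroupFacts.

End P1.
Import P1.

Module P2.

Section Sorting.
Variables (T : Type) (lt : T -> T -> Prop).
Hypothesis irr : forall x, ~ lt x x.
Hypothesis tr : forall x y z, lt x y -> lt y z -> lt x z.
Hypothesis tri : forall x y, lt x y \/ x = y \/ lt y x.

Lemma SS_app l1 l2 : StronglySorted lt l1 -> StronglySorted lt l2 ->
  (forall a b, In a l1 -> In b l2 -> lt a b) -> StronglySorted lt (l1 ++ l2).
Proof.
  induction l1 as [|x l1 IH]; simpl; intros H1 H2 H; auto.
  inversion H1; subst. constructor. apply IH; auto.
  apply Forall_app; split; auto. apply Forall_forall; intros; apply H; auto.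
Qed.

Lemma SS_insert l x : StronglySorted lt l -> exists l', StronglySorted lt l' /\ forall y, In y l' <-> y = x \/ In y l.
Proof.
  induction l as [|z l IH]; intros H.
  - exists [x]. split. repeat constructor. simpl; intuition.
  - inversion H; subst. destruct (tri x z) as [Hl|[He|Hg]].
    + exists (x :: z :: l). split. constructor; auto. constructor. auto.
      apply Forall_forall; intros y Hy. apply tr with z; auto. eapply Forall_forall; eauto.
      simpl; intuition.
    + subst. exists (z :: l). split; auto. simpl; intuition.
    + destruct (IH H2) as (l' & Hs & Hm). exists (z :: l'). split.
      * constructor; auto. apply Forall_forall; intros y Hy. apply Hm in Hy as [->|Hy]; auto.
        eapply Forall_forall; eauto.
      * intros y; simpl; rewrite Hm. intuition.
Qed.

Lemma SS_exists L : exists l, StronglySorted lt l /\ forall y, In y l <-> In y L.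
Proof.
  induction L as [|x L IH].
  - exists []; split; [constructor|simpl; tauto].
  - destruct IH as (l & Hs & Hm). destruct (SS_insert l x Hs) as (l' & Hs' & Hm').
    exists l'; split; auto. intros y; rewrite Hm'; simpl; rewrite Hm; split; intros [?|?]; subst; auto.
Qed.

Lemma SS_flat_map {X} (phi : T -> list X) l1 l2 : StronglySorted lt l1 -> StronglySorted lt l2 ->
  (forall x, In x l1 -> In x l2) -> (forall x, In x l2 -> ~ In x l1 -> phi x = []) ->
  flat_map phi l1 = flat_map phi l2.
Proof.
  revert l1. induction l2 as [|y l2 IH]; intros l1 S1 S2 Hi Hn.
  - destruct l1 as [|x l1]; auto. exfalso; apply (Hi x); simpl; auto.
  - inversion S2; subst. destruct (classic (In y l1)) as [Hy|Hy].
    + destruct l1 as [|x l1]. destruct Hy.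
      inversion S1; subst.
      assert (x = y).
      { destruct (Hi x (or_introl eq_refl)) as [->|Hx]; auto.
        assert (lt y x) by (eapply Forall_forall; eauto).
        destruct Hy as [->|Hy]. auto. exfalso. apply (irr x). apply tr with y; auto.
        eapply Forall_forall; eauto. }
      subst. simpl. f_equal. apply IH; auto.
      * intros z Hz. destruct (Hi z (or_intror Hz)) as [E|]; auto.
        exfalso. subst. match goal with H: Forall (lt ?a) ?l, H': In ?a ?l |- _ => apply (irr a); rewrite Forall_forall in H; auto end.
      * intros z Hz Hz'. apply Hn. simpl; auto. intros [E|]; auto. subst.
        exfalso. match goal with H: Forall (lt ?a) ?l, H': In ?a ?l |- _ => apply (irr a); rewrite Forall_forall in H; auto end.
    + simpl. rewrite (Hn y (or_introl eq_refl) Hy). simpl. apply IH; auto.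
      intros z Hz. destruct (Hi z Hz) as [<-|]; tauto.
      intros z Hz Hz'. apply Hn; simpl; auto.
Qed.
End Sorting.

Lemma SS_map {A B} (R : A -> A -> Prop) (R' : B -> B -> Prop) (f : A -> B) l :
  (forall a b, R a b -> R' (f a) (f b)) -> StronglySorted R l -> StronglySorted R' (map f l).
Proof.
  intros H. induction 1; simpl; constructor; auto.
  apply Forall_forall; intros y Hy. apply in_map_iff in Hy as (z & <- & Hz).
  apply H. eapply Forall_forall; eauto.
Qed.



Lemma SS_app_gen {A} (R : A -> A -> Prop) l1 l2 : StronglySorted R l1 -> StronglySorted R l2 ->
  (forall a b, In a l1 -> In b l2 -> R a b) -> StronglySorted R (l1 ++ l2).
Proof.
  induction l1 as [|x l1 IH]; simpl; intros H1 H2 H; auto.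
  inversion H1; subst. constructor. apply IH; auto.
  apply Forall_app; split; auto. apply Forall_forall; intros; apply H; auto.
Qed.

Lemma SS_rev {A} (R : A -> A -> Prop) l : StronglySorted R l -> StronglySorted (fun a b => R b a) (rev l).
Proof.
  induction 1; simpl. constructor.
  apply SS_app_gen; auto. repeat constructor.
  intros u v Hu [<-|[]]. apply in_rev in Hu. eapply Forall_forall; eauto.
Qed.

Lemma finv_flat_map I F {T} (g : T -> list (fletter I F)) l :
  finv I F (flat_map g l) = flat_map (fun x => finv I F (g x)) (rev l).
Proof.
  induction l as [|x l IH]; simpl; auto. rewrite finv_app, IH, flat_map_app. simpl. rewrite app_nil_r. auto.
Qed.

Section IW.
Variable G : nat -> GrpOps.

Implicit Types u v : IWord G.
Definition FE (m : nat) := fp_eq {i : nat | i < m} (fun i => G (proj1_sig i)).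

Section W.
Variable u : IWord G.
Hypothesis W : iw_wf u.
Lemma wf_irr x : ~ ilt u x x. Proof. apply W. Qed.
Lemma wf_tr x y z : ilt u x y -> ilt u y z -> ilt u x z. Proof. apply W. Qed.
Lemma wf_tri x y : ilt u x y \/ x = y \/ ilt u y x. Proof. apply W. Qed.
Lemma wf_fin n : exists l : list (iL u), forall x, projT1 (iw u x) = n -> In x l. Proof. apply W. Qed.
Lemma wf_cnt : exists f : iL u -> nat, forall x y, f x = f y -> x = y. Proof. apply W. Qed.
Lemma wf_nonid x : ~ geq (G (projT1 (iw u x))) (projT2 (iw u x)) (gone _). Proof. apply W. Qed.

Lemma wf_fin_lt m : exists L, forall x, projT1 (iw u x) < m -> In x L.
Proof.
  induction m as [|m [L HL]]. exists []; intros; lia.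
  destruct (wf_fin m) as [L' HL']. exists (L ++ L'). intros x Hx. apply in_app_iff.
  destruct (Nat.eq_dec (projT1 (iw u x)) m); [right; auto|left; apply HL; lia].
Qed.

Lemma restr_enum_ex m : exists l, restr_enum u m l.
Proof.
  destruct (wf_fin_lt m) as [L HL].
  destruct (SS_exists _ (ilt u) wf_tr wf_tri (filter (fun x => projT1 (iw u x) <? m) L)) as (l & Hs & Hm).
  exists l; split; auto. intros x. rewrite Hm, filter_In, Nat.ltb_lt. intuition.
Qed.
End W.

Definition Rl (u : IWord G) m := epsilon (inhabits (@nil (iL u))) (restr_enum u m).
Definition Rw (u : IWord G) m := restr_word u m (Rl u m).

Lemma Rl_spec u m : iw_wf u -> restr_enum u m (Rl u m).
Proof. intros W. unfold Rl. apply epsilon_spec. apply restr_enum_ex; auto. Qed.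

Lemma restr_word_eq u m l1 l2 : iw_wf u -> restr_enum u m l1 -> restr_enum u m l2 ->
  restr_word u m l1 = restr_word u m l2.
Proof.
  intros W [S1 M1] [S2 M2]. unfold restr_word.
  apply (SS_flat_map _ (ilt u) (wf_irr u W) (wf_tr u W)); auto.
  intros x Hx; apply M2, M1; auto.
  intros x Hx Hx'. exfalso; apply Hx', M1, M2; auto.
Qed.

Lemma Rw_any u m l : iw_wf u -> restr_enum u m l -> restr_word u m l = Rw u m.
Proof. intros W H. apply restr_word_eq; auto. apply Rl_spec; auto. Qed.

Lemma tp_eq_Rw u v : iw_wf u -> iw_wf v -> (tp_eq u v <-> forall m, FE m (Rw u m) (Rw v m)).
Proof.
  intros Wu Wv; split.
  - intros H m. apply H; apply Rl_spec; auto.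
  - intros H m l1 l2 H1 H2. rewrite (Rw_any u m l1), (Rw_any v m l2); auto. apply H.
Qed.

Lemma wf_mul u v : iw_wf u -> iw_wf v -> iw_wf (tp_mul u v).
Proof.
  intros Wu Wv. split; [|split; [|split; [|split; [|split]]]].
  - intros [x|x]; simpl; auto; apply wf_irr; auto.
  - intros [x|x] [y|y] [z|z]; simpl; try tauto; apply wf_tr; auto.
  - intros [x|x] [y|y]; simpl; auto.
    + destruct (wf_tri u Wu x y) as [?|[->|?]]; auto.
    + destruct (wf_tri v Wv x y) as [?|[->|?]]; auto.
  - destruct (wf_cnt u Wu) as [f Hf]. destruct (wf_cnt v Wv) as [g Hg].
    exists (fun a => match a with inl x => 2 * f x | inr y => 2 * g y + 1 end).
    intros [x|x] [y|y] E; try lia. f_equal; apply Hf; lia. f_equal; apply Hg; lia.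
  - intros n. destruct (wf_fin u Wu n) as [l1 H1]. destruct (wf_fin v Wv n) as [l2 H2].
    exists (map inl l1 ++ map inr l2). intros [x|x] Hx; apply in_app_iff; [left|right]; apply in_map; auto.
  - intros [x|x]; simpl; apply wf_nonid; auto.
Qed.

Hypothesis Hinv1 : forall n g, geq (G n) (ginv (G n) g) (gone (G n)) -> geq (G n) g (gone (G n)).

Lemma inv_idx u x : projT1 (iw (tp_inv u) x) = projT1 (iw u x).
Proof. simpl. destruct (iw u x); auto. Qed.

Lemma wf_inv u : iw_wf u -> iw_wf (tp_inv u).
Proof.
  intros Wu. split; [|split; [|split; [|split; [|split]]]]; simpl.
  - apply wf_irr; auto.
  - intros x y z H1 H2; eapply wf_tr; eauto.
  - intros x y. destruct (wf_tri u Wu x y) as [?|[->|?]]; auto.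
  - apply wf_cnt; auto.
  - intros n. destruct (wf_fin u Wu n) as [l Hl]. exists l. intros x Hx. apply Hl. rewrite <- Hx.
    symmetry; apply inv_idx.
  - intros x. pose proof (wf_nonid u Wu x). destruct (iw u x) as [n g]; simpl in *.
    intros Hc; apply H, Hinv1; auto.
Qed.

Lemma Rw_mul u v m : iw_wf u -> iw_wf v -> Rw (tp_mul u v) m = Rw u m ++ Rw v m.
Proof.
  intros Wu Wv. pose proof (Rl_spec u m Wu) as [S1 M1]. pose proof (Rl_spec v m Wv) as [S2 M2].
  rewrite <- (Rw_any (tp_mul u v) m (map inl (Rl u m) ++ map inr (Rl v m))).
  - unfold restr_word, Rw. rewrite flat_map_app, !flat_map_concat_map, !map_map. simpl. rewrite <- !flat_map_concat_map. reflexivity.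
  - apply wf_mul; auto.
  - split.
    + apply SS_app_gen. apply (SS_map (ilt u)); auto. apply (SS_map (ilt v)); auto.
      intros a b Ha Hb. apply in_map_iff in Ha as (? & <- & _). apply in_map_iff in Hb as (? & <- & _). simpl; auto.
    + intros [x|x]; rewrite in_app_iff, !in_map_iff; simpl; split.
      * intros [(y & E & Hy)|(y & E & Hy)]; inversion E; subst. apply M1; auto.
      * intros H; left; exists x; split; auto. apply M1; auto.
      * intros [(y & E & Hy)|(y & E & Hy)]; inversion E; subst. apply M2; auto.
      * intros H; right; exists x; split; auto. apply M2; auto.
Qed.

Lemma restr_letter_inv m (a : Letter G) :
  restr_letter m (let (n, g) := a in existT _ n (ginv (G n) g)) =
  finv _ (fun i : {i | i < m} => G (proj1_sig i)) (restr_letter m a).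
Proof. destruct a as [n g]; simpl. destruct (Compare_dec.lt_dec n m); reflexivity. Qed.

Lemma Rw_inv u m : iw_wf u -> Rw (tp_inv u) m = finv _ _ (Rw u m).
Proof.
  intros Wu. pose proof (Rl_spec u m Wu) as [S1 M1].
  rewrite <- (Rw_any (tp_inv u) m (rev (Rl u m))).
  - unfold Rw. unfold restr_word at 2. rewrite finv_flat_map. apply flat_map_ext. intros x.
    apply restr_letter_inv.
  - apply wf_inv; auto.
  - split. apply (SS_rev (ilt u)); auto.
    intros x. rewrite <- in_rev, M1, inv_idx. tauto.
Qed.

Definition word_iso (u v : IWord G) : Prop :=
  exists phi : iL u -> iL v, (forall x y, ilt u x y <-> ilt v (phi x) (phi y)) /\
    (forall y, exists x, phi x = y) /\ (forall x, iw v (phi x) = iw u x).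

Lemma iso_Rw u v m : iw_wf u -> iw_wf v -> word_iso u v -> Rw u m = Rw v m.
Proof.
  intros Wu Wv (phi & Ho & Hs & Hw). pose proof (Rl_spec u m Wu) as [S1 M1].
  rewrite <- (Rw_any v m (map phi (Rl u m))); auto.
  - unfold restr_word, Rw. rewrite flat_map_concat_map, map_map, <- flat_map_concat_map.
    apply flat_map_ext. intros x; rewrite Hw; auto.
  - split. apply (SS_map (ilt u)); auto. intros; apply Ho; auto.
    intros y. rewrite in_map_iff. split.
    + intros (x & <- & Hx). rewrite Hw. apply M1; auto.
    + intros H. destruct (Hs y) as [x <-]. exists x; split; auto. apply M1. rewrite <- Hw; auto.
Qed.
End IW.

End P2.
Import P2.

Module P3.

Section Arch.
Variable G : nat -> GrpOps.
Implicit Types u v w : IWord G.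
Hypothesis HW : forall n, WG (G n).
Hypothesis Hinv1 : forall n g, geq (G n) (ginv (G n) g) (gone (G n)) -> geq (G n) g (gone (G n)).

Lemma WGm m : forall i : {i : nat | i < m}, WG (G (proj1_sig i)).
Proof. intros; apply HW. Qed.

Definition Rweq u v := forall m, FE G m (Rw G u m) (Rw G v m).

Lemma Rweq_refl u : Rweq u u. Proof. intros m; apply feq_refl. Qed.
Lemma Rweq_sym u v : Rweq u v -> Rweq v u. Proof. intros H m; apply feq_sym; apply H. Qed.
Lemma Rweq_trans u v w : Rweq u v -> Rweq v w -> Rweq u w. Proof. intros H H' m; eapply feq_trans; [apply H|apply H']. Qed.

Lemma NC_wf u : NC u -> iw_wf u.
Proof.
  induction 1; auto. apply wf_mul; auto. apply wf_inv; auto. apply wf_mul; auto. apply wf_mul; auto.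
  apply wf_inv; auto.
Qed.

Lemma NC_Rweq u v : NC u -> iw_wf v -> Rweq u v -> NC v.
Proof.
  intros H Wv E. apply (NC_eq u v H Wv). apply tp_eq_Rw; auto. apply NC_wf; auto.
Qed.

Definition Eword : IWord G := {| iL := Empty_set; ilt := fun _ _ => False; iw := fun x : Empty_set => match x with end |}.
Lemma wf_E : iw_wf Eword.
Proof.
  split; [|split; [|split; [|split; [|split]]]].
  intros []. intros []. intros []. 
  exists (fun x : Empty_set => match x with end). intros [].
  intros; exists []; intros []. intros [].
Qed.
Lemma Rw_E m : Rw G Eword m = [].
Proof.
  rewrite <- (Rw_any G Eword m []). reflexivity. apply wf_E. split. constructor. intros [].
Qed.
Lemma NC_E : NC Eword.
Proof. apply NC_fin. apply wf_E. exists []. intros []. Qed.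

Lemma NC_triv u : iw_wf u -> (forall m, FE G m (Rw G u m) []) -> NC u.
Proof.
  intros W H. apply (NC_Rweq Eword); auto. apply NC_E. intros m. rewrite Rw_E. apply feq_sym; apply H.
Qed.

Lemma Rw_div u v m : iw_wf u -> iw_wf v -> Rw G (tp_mul u (tp_inv v)) m = Rw G u m ++ finv _ _ (Rw G v m).
Proof.
  intros Wu Wv. rewrite Rw_mul, Rw_inv; auto. apply wf_inv; auto.
Qed.

Lemma arch_refl u : iw_wf u -> arch_eq u u.
Proof.
  intros W. apply NC_triv. apply wf_mul; auto. apply wf_inv; auto.
  intros m. rewrite Rw_div; auto. apply (rinv_feq _ _ (WGm m)).
Qed.

Lemma arch_Rweq u v u' v' : iw_wf u' -> iw_wf v' -> iw_wf u -> iw_wf v -> Rweq u u' -> Rweq v v' -> arch_eq u v -> arch_eq u' v'.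
Proof.
  intros W1 W2 W3 W4 E1 E2 H. apply (NC_Rweq _ _ H). apply wf_mul; auto. apply wf_inv; auto.
  intros m. rewrite !Rw_div; auto. apply feq_app. apply E1. apply (finv_feq _ _ (WGm m)). apply E2.
Qed.

Lemma arch_sym u v : iw_wf u -> iw_wf v -> arch_eq u v -> arch_eq v u.
Proof.
  intros Wu Wv H. apply NC_inv in H. apply (NC_Rweq _ _ H). apply wf_mul; auto. apply wf_inv; auto.
  intros m. rewrite Rw_inv, !Rw_div, finv_app; auto. apply feq_app. apply (finv_finv _ _ (WGm m)).
  apply feq_refl. apply wf_mul; auto. apply wf_inv; auto.
Qed.

Lemma arch_trans u v w : iw_wf u -> iw_wf v -> iw_wf w -> arch_eq u v -> arch_eq v w -> arch_eq u w.
Proof.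
  intros Wu Wv Ww H1 H2. pose proof (NC_mul _ _ H1 H2) as H. apply (NC_Rweq _ _ H). apply wf_mul; auto. apply wf_inv; auto.
  intros m. rewrite Rw_mul, !Rw_div; auto. 2,3: apply wf_mul; auto; apply wf_inv; auto.
  rewrite <- !app_assoc. apply feq_app. apply feq_refl. rewrite app_assoc.
  change (finv _ _ (Rw G w m)) with ([] ++ finv _ _ (Rw G w m)) at 2.
  apply feq_app. apply (linv_feq _ _ (WGm m)). apply feq_refl.
Qed.

Lemma arch_of_Rweq u v : iw_wf u -> iw_wf v -> Rweq u v -> arch_eq u v.
Proof.
  intros Wu Wv E. apply (arch_Rweq u u); auto. apply Rweq_refl. apply arch_refl; auto.
Qed.
End Arch.

End P3.
Import P3.

Module P4.

Lemma sig_ext {T} {Q : T -> Prop} (a b : {x | Q x}) : proj1_sig a = proj1_sig b -> a = b.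
Proof. destruct a, b; simpl; intros; subst; f_equal; apply proof_irrelevance. Qed.

Lemma sub_list {T} (Q : T -> Prop) (l : list T) : exists ls : list {x | Q x}, forall s, In (proj1_sig s) l -> In s ls.
Proof.
  induction l as [|x l [ls H]]. exists []; simpl; tauto.
  destruct (classic (Q x)) as [q|nq].
  - exists (exist _ x q :: ls). intros s [E|Hs]; [left; apply sig_ext; auto | right; auto].
  - exists ls. intros s [E|Hs]; auto. exfalso; apply nq; rewrite E; apply proj2_sig.
Qed.

Lemma firstn_S_nth {A} (l : list A) n d : n < length l -> firstn (S n) l = firstn n l ++ [nth n l d].
Proof. revert n; induction l; intros [|n] H; simpl in *; try lia; auto. rewrite IHl by lia. auto. Qed.

Lemma flat_map_ext_in {A B} (f g : A -> list B) l : (forall x, In x l -> f x = g x) -> flat_map f l = flat_map g l.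
Proof. induction l; simpl; intros; auto. rewrite H, IHl; auto. Qed.

Lemma flat_map_flat_map {A B C} (f : A -> list B) (g : B -> list C) l :
  flat_map g (flat_map f l) = flat_map (fun x => flat_map g (f x)) l.
Proof. induction l; simpl; auto. rewrite flat_map_app, IHl; auto. Qed.

Lemma flat_map_map' {A B C} (f : B -> list C) (g : A -> B) l : flat_map f (map g l) = flat_map (fun x => f (g x)) l.
Proof. induction l; simpl; auto. rewrite IHl; auto. Qed.

Lemma flat_map_feq I F {A} (f g : A -> list (fletter I F)) l : (forall x, fp_eq I F (f x) (g x)) -> fp_eq I F (flat_map f l) (flat_map g l).
Proof. intros H; induction l; simpl. apply feq_refl. apply feq_app; auto. Qed.

Lemma restr_letter_ge {G} m (a : Letter G) : m <= projT1 a -> restr_letter m a = [].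
Proof. destruct a as [n g]; simpl; intros. destruct (Compare_dec.lt_dec n m); auto; lia. Qed.

Definition invL {G : nat -> GrpOps} (a : Letter G) : Letter G := let (n, g) := a in existT _ n (ginv (G n) g).

Section Subst.
Variables (G H : nat -> GrpOps) (th : Letter G -> list (Letter H)).
Definition dflt : Letter H := existT _ 0 (gone (H 0)).

Definition subst (u : IWord G) : IWord H :=
 {| iL := {p : iL u * nat | snd p < length (th (iw u (fst p)))};
    ilt := fun a b => ilt u (fst (proj1_sig a)) (fst (proj1_sig b)) \/
                      (fst (proj1_sig a) = fst (proj1_sig b) /\ snd (proj1_sig a) < snd (proj1_sig b));
    iw := fun a => nth (snd (proj1_sig a)) (th (iw u (fst (proj1_sig a)))) dflt |}.

Definition Fm m (a : Letter G) := flat_map (restr_letter m) (th a).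

Hypothesis Hlev : forall m, exists k, forall a, k <= projT1 a -> forall b, In b (th a) -> m <= projT1 b.
Hypothesis Hnonid : forall a, ~ geq (G (projT1 a)) (projT2 a) (gone _) -> forall b, In b (th a) -> ~ geq (H (projT1 b)) (projT2 b) (gone _).

Lemma subst_letter_in u (p : iL (subst u)) : In (iw (subst u) p) (th (iw u (fst (proj1_sig p)))).
Proof. destruct p as [[x j] h]; simpl in *. apply nth_In; auto. Qed.

Lemma wf_subst u : iw_wf u -> iw_wf (subst u).
Proof.
  intros W. split; [|split; [|split; [|split; [|split]]]].
  - intros [[x j] h]; simpl. intros [Hc|[_ Hc]]. apply (wf_irr G u W x Hc). lia.
  - intros [[x j] h] [[y j'] h'] [[z j''] h'']; simpl. intros [H1|[E1 H1]] [H2|[E2 H2]]; subst.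
    + left; eapply wf_tr; eauto.
    + left; auto.
    + left; auto.
    + right; split; auto; lia.
  - intros [[x j] h] [[y j'] h']; simpl. destruct (wf_tri G u W x y) as [?|[E|?]]; auto. subst.
    destruct (lt_eq_lt_dec j j') as [[?|E]|?]; auto. subst. right; left; apply sig_ext; auto.
  - destruct (wf_cnt G u W) as [f Hf]. exists (fun p => Cantor.to_nat (f (fst (proj1_sig p)), snd (proj1_sig p))).
    intros [[x j] h] [[y j'] h'] E; cbn [proj1_sig fst snd] in E. apply (f_equal Cantor.of_nat) in E.
    rewrite !Cantor.cancel_of_to in E. injection E; intros. apply sig_ext; simpl. f_equal; auto.
  - intros n. destruct (Hlev (S n)) as [k Hk]. destruct (wf_fin_lt G u W k) as [L HL].
    destruct (sub_list (fun p : iL u * nat => snd p < length (th (iw u (fst p))))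
      (flat_map (fun x => map (fun j => (x,j)) (seq 0 (length (th (iw u x))))) L)) as [ls Hls].
    exists ls. intros p Hp. apply Hls. destruct p as [[x j] h]; simpl in *. apply in_flat_map. exists x. split.
    + apply HL. destruct (le_lt_dec k (projT1 (iw u x))) as [Hkx|]; auto. exfalso.
      pose proof (Hk _ Hkx _ (nth_In _ dflt h)). lia.
    + apply in_map_iff. exists j; split; auto. apply in_seq; lia.
  - intros p. apply (Hnonid (iw u (fst (proj1_sig p)))). apply wf_nonid; auto. apply subst_letter_in.
Qed.

Lemma subst_block u m x : exists px : list (iL (subst u)), StronglySorted (ilt (subst u)) px /\
  (forall p, In p px <-> fst (proj1_sig p) = x) /\
  flat_map (fun p => restr_letter m (iw (subst u) p)) px = Fm m (iw u x).
Proof.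
  assert (forall n, n <= length (th (iw u x)) -> exists px : list (iL (subst u)), StronglySorted (ilt (subst u)) px /\
    (forall p, In p px <-> fst (proj1_sig p) = x /\ snd (proj1_sig p) < n) /\
    flat_map (fun p => restr_letter m (iw (subst u) p)) px = flat_map (restr_letter m) (firstn n (th (iw u x)))).
  { induction n as [|n IH]; intros Hn.
    - exists []. split. constructor. split. intros p; simpl; lia. auto.
    - destruct (IH ltac:(lia)) as (px & S & M & E).
      pose (pn := exist (fun p : iL u * nat => snd p < length (th (iw u (fst p)))) (x, n) Hn : iL (subst u)).
      exists (px ++ [pn]). split; [|split].
      + apply SS_app_gen; auto. repeat constructor. intros a b Ha [<-|[]].
        apply M in Ha as [E1 E2]. simpl. right; split; auto.
      + intros p. rewrite in_app_iff, M. simpl. split.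
        * intros [[E1 E2]|[<-|[]]]; simpl; split; auto; lia.
        * intros [E1 E2]. destruct (Nat.eq_dec (snd (proj1_sig p)) n); [right; left|left; split; auto; lia].
          apply sig_ext. simpl. destruct (proj1_sig p); simpl in *; subst; auto.
      + rewrite flat_map_app, E, (firstn_S_nth _ _ dflt) by lia. rewrite flat_map_app. simpl. reflexivity. }
  destruct (H0 (length (th (iw u x))) (le_n _)) as (px & S & M & E).
  exists px. split; auto. split.
  - intros p; rewrite M. split; [tauto|]. intros E'; split; auto. destruct p as [[y j] h]; simpl in *; subst; auto.
  - rewrite E, firstn_all. reflexivity.
Qed.

Lemma subst_list u m l : StronglySorted (ilt u) l -> exists lp : list (iL (subst u)), StronglySorted (ilt (subst u)) lp /\
  (forall p, In p lp <-> In (fst (proj1_sig p)) l) /\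
  flat_map (fun p => restr_letter m (iw (subst u) p)) lp = flat_map (fun x => Fm m (iw u x)) l.
Proof.
  induction 1 as [|x l S IH HF].
  - exists []. split. constructor. split; simpl; tauto.
  - destruct IH as (lp & S' & M' & E'). destruct (subst_block u m x) as (px & S1 & M1 & E1).
    exists (px ++ lp). split; [|split].
    + apply SS_app_gen; auto. intros a b Ha Hb. apply M1 in Ha. apply M' in Hb. simpl. left. rewrite Ha.
      eapply Forall_forall; eauto.
    + intros p; rewrite in_app_iff, M1, M'. simpl. split; intros [?|?]; auto.
    + rewrite flat_map_app, E1, E'. reflexivity.
Qed.

Lemma subst_Rw u m k : iw_wf u -> (forall a, k <= projT1 a -> forall b, In b (th a) -> m <= projT1 b) ->
  Rw H (subst u) m = flat_map (fun x => Fm m (iw u x)) (Rl G u k).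
Proof.
  intros W Hk. pose proof (Rl_spec G u k W) as [S M].
  destruct (subst_list u m _ S) as (lp & S' & M' & E').
  pose proof (wf_subst u W) as W'. pose proof (Rl_spec H (subst u) m W') as [S2 M2].
  unfold Rw, restr_word. rewrite <- E'.
  apply (SS_flat_map _ (ilt (subst u)) (wf_irr H _ W') (wf_tr H _ W')); auto.
  - intros p Hp. apply M'. apply M. apply M2 in Hp.
    destruct (le_lt_dec k (projT1 (iw u (fst (proj1_sig p))))) as [Hkx|]; auto. exfalso.
    pose proof (Hk _ Hkx _ (subst_letter_in u p)). lia.
  - intros p _ Hp. apply restr_letter_ge. destruct (le_lt_dec m (projT1 (iw (subst u) p))); auto.
    exfalso; apply Hp, M2; auto.
Qed.

Definition Psi k m (a : fletter {i | i < k} (fun i => G (proj1_sig i))) : list (fletter {i | i < m} (fun i => H (proj1_sig i))) :=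
  Fm m (existT _ (proj1_sig (projT1 a)) (projT2 a)).

Lemma subst_Psi u m k : iw_wf u -> (forall a, k <= projT1 a -> forall b, In b (th a) -> m <= projT1 b) ->
  Rw H (subst u) m = flat_map (Psi k m) (Rw G u k).
Proof.
  intros W Hk. rewrite subst_Rw with (k := k); auto. unfold Rw, restr_word. rewrite flat_map_flat_map.
  pose proof (Rl_spec G u k W) as [S M].
  apply flat_map_ext_in. intros x Hx. apply M in Hx. destruct (iw u x) as [n g]; simpl in *.
  destruct (Compare_dec.lt_dec n k); [|lia]. simpl. rewrite app_nil_r. reflexivity.
Qed.

Hypothesis HWG : forall n, WG (G n).
Hypothesis Hinv1G : forall n g, geq (G n) (ginv (G n) g) (gone (G n)) -> geq (G n) g (gone (G n)).
Hypothesis HWH : forall n, WG (H n).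
Hypothesis Hinv1H : forall n g, geq (H n) (ginv (H n) g) (gone (H n)) -> geq (H n) g (gone (H n)).

Hypothesis Hmerge : forall m n g h, FE H m (Fm m (existT _ n (gmul (G n) g h))) (Fm m (existT _ n g) ++ Fm m (existT _ n h)).
Hypothesis Hdel : forall m n g, geq (G n) g (gone (G n)) -> FE H m (Fm m (existT _ n g)) [].
Hypothesis Hrepl : forall m n g h, geq (G n) g h -> FE H m (Fm m (existT _ n g)) (Fm m (existT _ n h)).
Hypothesis Hinvth : forall m a, FE H m (Fm m (invL a)) (finv _ _ (Fm m a)).

Lemma Psi_feq k m w w' : FE G k w w' -> FE H m (flat_map (Psi k m) w) (flat_map (Psi k m) w').
Proof.
  apply hom_feq; intros [i Hi]; simpl; intros; unfold Psi; simpl. apply Hmerge. apply Hdel; auto. apply Hrepl; auto.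
Qed.

Lemma Psi_inv k m w : FE H m (flat_map (Psi k m) (finv _ _ w)) (finv _ _ (flat_map (Psi k m) w)).
Proof.
  rewrite finv_flat_map. unfold finv at 1. rewrite <- map_rev, flat_map_map'.
  apply flat_map_feq. intros [[i Hi] g]. unfold Psi; simpl. apply (Hinvth m (existT _ i g)).
Qed.

Lemma subst_Rweq u v : iw_wf u -> iw_wf v -> Rweq G u v -> Rweq H (subst u) (subst v).
Proof.
  intros Wu Wv E m. destruct (Hlev m) as [k Hk]. rewrite !(subst_Psi _ m k); auto. apply Psi_feq, E.
Qed.

Lemma subst_mul u v : iw_wf u -> iw_wf v -> Rweq H (subst (tp_mul u v)) (tp_mul (subst u) (subst v)).
Proof.
  intros Wu Wv m. destruct (Hlev m) as [k Hk]. rewrite Rw_mul by (apply wf_subst; auto).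
  rewrite !(subst_Psi _ m k); auto. rewrite Rw_mul, flat_map_app; auto. apply feq_refl. apply wf_mul; auto.
Qed.

Lemma subst_inv u : iw_wf u -> Rweq H (subst (tp_inv u)) (tp_inv (subst u)).
Proof.
  intros Wu m. destruct (Hlev m) as [k Hk]. rewrite Rw_inv; auto. 2: apply wf_subst; auto.
  rewrite !(subst_Psi _ m k); auto. rewrite Rw_inv; auto. apply Psi_inv. apply wf_inv; auto.
Qed.

Lemma subst_fin u : finite_word u -> finite_word (subst u).
Proof.
  intros [l Hl].
  destruct (sub_list (fun p : iL u * nat => snd p < length (th (iw u (fst p))))
      (flat_map (fun x => map (fun j => (x,j)) (seq 0 (length (th (iw u x))))) l)) as [ls Hls].
  exists ls. intros p. apply Hls. destruct p as [[x j] h]; simpl in *. apply in_flat_map. exists x. split; auto.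
  apply in_map_iff. exists j; split; auto. apply in_seq; lia.
Qed.

Lemma NC_subst u : NC u -> NC (subst u).
Proof.
  induction 1 as [u W Hf|u v Hu IH Wv E|u v Hu IHu Hv IHv|u Hu IH|u g Hu IH Wg].
  - apply NC_fin. apply wf_subst; auto. apply subst_fin; auto.
  - assert (Wu := NC_wf G Hinv1G _ Hu).
    apply (NC_Rweq H Hinv1H (subst u)); auto. apply wf_subst; auto. apply subst_Rweq; auto.
    intros m; apply (proj1 (tp_eq_Rw G u v Wu Wv)); auto.
  - pose proof (NC_wf G Hinv1G _ Hu) as Wu. pose proof (NC_wf G Hinv1G _ Hv) as Wv.
    apply (NC_Rweq H Hinv1H _ _ (NC_mul _ _ IHu IHv)). apply wf_subst, wf_mul; auto.
    apply Rweq_sym, subst_mul; auto.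
  - pose proof (NC_wf G Hinv1G _ Hu) as Wu.
    apply (NC_Rweq H Hinv1H _ _ (NC_inv _ IH)). apply wf_subst, wf_inv; auto.
    apply Rweq_sym, subst_inv; auto.
  - pose proof (NC_wf G Hinv1G _ Hu) as Wu.
    assert (Wsg := wf_subst g Wg). assert (Wsu := wf_subst u Wu).
    apply (NC_Rweq H Hinv1H _ _ (NC_conj _ _ IH Wsg)).
    apply wf_subst. apply wf_mul. apply wf_mul; auto. apply wf_inv; auto.
    apply Rweq_sym. eapply Rweq_trans. apply subst_mul. apply wf_mul; auto. apply wf_inv; auto.
    intros m. 
    pose proof (subst_mul g u Wg Wu m) as E1.
    pose proof (subst_inv g Wg m) as E2.
    rewrite (Rw_mul H), (Rw_mul H).
    all: try solve [repeat first [assumption | apply wf_subst | apply wf_mul | apply wf_inv]].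
    apply feq_app; auto.
Qed.
Lemma arch_subst u v : iw_wf u -> iw_wf v -> arch_eq u v -> arch_eq (subst u) (subst v).
Proof.
  intros Wu Wv Hn. apply NC_subst in Hn. unfold arch_eq. apply (NC_Rweq H Hinv1H _ _ Hn).
  apply wf_mul; [apply wf_subst; auto|apply wf_inv; auto; apply wf_subst; auto].
  intros m. eapply feq_trans. apply subst_mul; auto. apply wf_inv; auto.
  rewrite (Rw_mul H), (Rw_mul H). apply feq_app. apply feq_refl.
  pose proof (subst_inv v Wv m) as E. exact E.
  all: try solve [repeat first [assumption | apply wf_subst | apply wf_mul | apply wf_inv]].
Qed.
End Subst.

End P4.
Import P4.

Module P5.

Section Del.
Variable G : nat -> GrpOps.
Implicit Types u v w : IWord G.
Hypothesis HW : forall n, WG (G n).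
Hypothesis Hinv1 : forall n g, geq (G n) (ginv (G n) g) (gone (G n)) -> geq (G n) g (gone (G n)).

Definition sub u (S : iL u -> Prop) : IWord G :=
  {| iL := {x : iL u | S x}; ilt := fun a b => ilt u (proj1_sig a) (proj1_sig b); iw := fun a => iw u (proj1_sig a) |}.

Lemma wf_sub u S : iw_wf u -> iw_wf (sub u S).
Proof.
  intros W. split; [|split; [|split; [|split; [|split]]]]; simpl.
  - intros x; apply wf_irr; auto.
  - intros x y z; apply wf_tr; auto.
  - intros x y. destruct (wf_tri G u W (proj1_sig x) (proj1_sig y)) as [?|[E|?]]; auto.
    right; left; apply sig_ext; auto.
  - destruct (wf_cnt G u W) as [f Hf]. exists (fun a => f (proj1_sig a)). intros x y E; apply sig_ext; auto.
  - intros n. destruct (wf_fin G u W n) as [l Hl]. destruct (sub_list S l) as [ls Hls].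
    exists ls. intros x Hx. apply Hls, Hl; auto.
  - intros x; apply wf_nonid; auto.
Qed.

Ltac wfs := repeat match goal with
 | |- iw_wf (tp_mul _ _) => apply wf_mul
 | |- iw_wf (tp_inv _) => apply (wf_inv G Hinv1)
 | |- iw_wf (sub _ _) => apply wf_sub
 | |- _ => assumption end.

Lemma Del1 u p : iw_wf u -> arch_eq u (sub u (fun x => x <> p)).
Proof.
  intros W.
  set (U1 := sub u (fun x => ilt u x p)). set (A := sub u (fun x => x = p)). set (U2 := sub u (fun x => ilt u p x)).
  set (V := sub u (fun x => x <> p)).
  assert (W1 : iw_wf U1) by (apply wf_sub; auto). assert (WA : iw_wf A) by (apply wf_sub; auto). assert (W2 : iw_wf U2) by (apply wf_sub; auto). assert (WV : iw_wf V) by (apply wf_sub; auto).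
  pose proof (wf_irr G u W) as Irr. pose proof (wf_tr G u W) as Tr.
  assert (I1 : word_iso G (tp_mul (tp_mul U1 A) U2) u).
  { exists (fun a => match a with inl (inl x) => proj1_sig x | inl (inr x) => proj1_sig x | inr x => proj1_sig x end).
    split; [|split].
    - intros [[[x hx]|[x hx]]|[x hx]] [[[y hy]|[y hy]]|[y hy]]; simpl; subst; split; intros; try tauto;
        try solve [eapply Tr; eauto]; exfalso; try (eapply Irr; eapply Tr; eassumption); try (eapply Irr; eapply Tr; [eapply Tr|]; eassumption); eauto.
    - intros y. destruct (wf_tri G u W y p) as [h|[h|h]].
      + exists (inl (inl (exist _ y h))); auto.
      + exists (inl (inr (exist _ y h))); auto.
      + exists (inr (exist _ y h)); auto.
    - intros [[[x hx]|[x hx]]|[x hx]]; reflexivity. }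
  assert (I2 : word_iso G (tp_mul U1 U2) V).
  { exists (fun a => match a with inl x => exist (fun y => y <> p) (proj1_sig x) (fun E => Irr p (eq_ind _ (fun z => ilt u z p) (proj2_sig x) _ E))
                            | inr x => exist (fun y => y <> p) (proj1_sig x) (fun E => Irr p (eq_ind _ (fun z => ilt u p z) (proj2_sig x) _ E)) end).
    split; [|split].
    - intros [[x hx]|[x hx]] [[y hy]|[y hy]]; simpl; split; intros; try tauto; try solve [eapply Tr; eauto]; exfalso; try (eapply Irr; eapply Tr; eassumption); try (eapply Irr; eapply Tr; [eapply Tr|]; eassumption); eauto.
    - intros [y hy]. destruct (wf_tri G u W y p) as [h|[h|h]].
      + exists (inl (exist _ y h)); apply sig_ext; auto.
      + exfalso; apply hy; auto.
      + exists (inr (exist _ y h)); apply sig_ext; auto.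
    - intros [[x hx]|[x hx]]; reflexivity. }
  apply (NC_Rweq G Hinv1 (tp_mul (tp_mul U1 A) (tp_inv U1))).
  - apply NC_conj; auto. apply NC_fin; auto. exists [exist (fun x => x = p) p eq_refl : iL A]. intros x; left; apply sig_ext; simpl.
    symmetry; apply (proj2_sig x).
  - wfs.
  - intros m.
    assert (E1 := iso_Rw G _ _ m (wf_mul G _ _ (wf_mul G _ _ W1 WA) W2) W I1).
    assert (E2 := iso_Rw G _ _ m (wf_mul G _ _ W1 W2) WV I2).
    rewrite (Rw_mul G (tp_mul U1 A) (tp_inv U1) m), (Rw_mul G U1 A m), (Rw_inv G Hinv1 U1 m),
      (Rw_mul G u (tp_inv V) m), (Rw_inv G Hinv1 V m); wfs.
    rewrite (Rw_mul G (tp_mul U1 A) U2 m), (Rw_mul G U1 A m) in E1; wfs.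
    rewrite (Rw_mul G U1 U2 m) in E2; wfs.
    rewrite <- E1, <- E2. rewrite finv_app.
    rewrite <- !app_assoc. apply feq_app. apply feq_refl. apply feq_app. apply feq_refl.
    rewrite app_assoc. change (finv _ _ (Rw G U1 m)) with ([] ++ finv _ _ (Rw G U1 m)) at 1.
    apply feq_app. apply feq_sym. apply (rinv_feq _ _ (WGm G HW m)). apply feq_refl.
Qed.

Lemma DelList u (l : list (iL u)) : forall S, iw_wf u -> (forall x, ~ S x -> In x l) -> arch_eq u (sub u S).
Proof.
  induction l as [|p l IH]; intros S W HS.
  - apply (arch_of_Rweq G HW Hinv1); wfs. intros m. rewrite (iso_Rw G (sub u S) u m); wfs. apply feq_refl.
    exists (@proj1_sig _ _). split; [|split]; simpl; try tauto.
    intros y. destruct (classic (S y)) as [h|h]. exists (exist _ y h); auto. destruct (HS y h).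
  - set (S' := fun x => S x \/ x = p).
    assert (H1 : arch_eq u (sub u S')).
    { apply IH; auto. intros x Hx. destruct (HS x) as [E|]; auto. intros h; apply Hx; left; auto.
      exfalso; apply Hx; right; auto. }
    destruct (classic (S p)) as [Hp|Hp].
    + apply (arch_trans G HW Hinv1 _ (sub u S')); wfs.
      apply (arch_of_Rweq G HW Hinv1); wfs. intros m. rewrite (iso_Rw G (sub u S) (sub u S') m); wfs. apply feq_refl.
      exists (fun a => exist S' (proj1_sig a) (or_introl (proj2_sig a))). split; [|split]; simpl; try tauto.
      intros [y [hy|hy]]. exists (exist _ y hy); apply sig_ext; auto. subst. exists (exist _ p Hp); apply sig_ext; auto.
    + set (u' := sub u S'). set (p' := exist S' p (or_intror eq_refl) : iL u').
      assert (Wu' : iw_wf u') by (apply wf_sub; auto).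
      apply (arch_trans G HW Hinv1 _ u'); wfs. apply (arch_trans G HW Hinv1 _ (sub u' (fun x => x <> p'))); wfs.
      apply Del1; auto.
      apply (arch_of_Rweq G HW Hinv1); wfs. intros m. rewrite (iso_Rw G (sub u S) (sub u' (fun x => x <> p')) m); wfs. apply feq_refl.
      unshelve eexists (fun a => exist _ (exist S' (proj1_sig a) (or_introl (proj2_sig a))) _).
      { simpl. intros E. apply (f_equal (@proj1_sig _ _)) in E. simpl in E. apply Hp. rewrite <- E. apply (proj2_sig a). }
      split; [|split]; simpl; try tauto.
      intros [[y [hy|hy]] ne]. exists (exist _ y hy); apply sig_ext; simpl; apply sig_ext; auto.
      exfalso. apply ne. subst. apply sig_ext; auto.
Qed.
End Del.

End P5.
Import P5.

Module P6.

Section Ev.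
Variables (G : nat -> GrpOps) (HG : forall n, is_group (G n)) (I : Type) (pr : I -> nat).

Definition cast_j j (x : fletter I (fun i => G (pr i))) : gcar (G j) :=
  match Nat.eq_dec (pr (projT1 x)) j with
  | left e => eq_rect (pr (projT1 x)) (fun t => gcar (G t)) (projT2 x) j e
  | right _ => gone (G j) end.
Definition ev j (w : list (fletter I (fun i => G (pr i)))) : gcar (G j) :=
  fold_right (fun x acc => gmul (G j) (cast_j j x) acc) (gone (G j)) w.

Lemma ev_app j w1 w2 : ev j (w1 ++ w2) = gmul (G j) (ev j w1) (ev j w2).
Proof.
  destruct (HG j) as (_&As&L1&_).
  induction w1; simpl. rewrite L1; auto. rewrite IHw1, As. auto.
Qed.

Lemma cast_mul j i g h : cast_j j (existT _ i (gmul (G (pr i)) g h)) = gmul (G j) (cast_j j (existT _ i g)) (cast_j j (existT _ i h)).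
Proof.
  unfold cast_j; simpl. destruct (Nat.eq_dec (pr i) j) as [e|ne].
  - destruct e. reflexivity.
  - destruct (HG j) as (_&_&L1&_). rewrite L1; auto.
Qed.

Lemma cast_one j i g : geq (G (pr i)) g (gone _) -> cast_j j (existT _ i g) = gone (G j).
Proof.
  intros H. apply (proj1 (HG _)) in H. subst. unfold cast_j; simpl.
  destruct (Nat.eq_dec (pr i) j) as [e|ne]; auto. destruct e; reflexivity.
Qed.

Lemma ev_feq j w w' : fp_eq I (fun i => G (pr i)) w w' -> ev j w = ev j w'.
Proof.
  destruct (HG j) as (_&As&L1&_).
  induction 1 as [w w' Hs| | |]; auto; [|congruence].
  destruct Hs as [w0 w1 i g h|w0 w1 i g Hg|w0 w1 i g h Hg]; rewrite !ev_app; f_equal; simpl.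
  - rewrite cast_mul, As. auto.
  - rewrite cast_one, L1; auto.
  - apply (proj1 (HG _)) in Hg. subst. auto.
Qed.

Lemma single_nonid i g : fp_eq I (fun i => G (pr i)) [existT _ i g] [] -> geq (G (pr i)) g (gone _).
Proof.
  intros H. apply (ev_feq (pr i)) in H. simpl in H. unfold cast_j in H; simpl in H.
  destruct (Nat.eq_dec (pr i) (pr i)) as [e|ne]; [|tauto].
  rewrite (UIP_refl_nat _ e) in H. simpl in H. destruct (HG (pr i)) as (Eq&_&_&R1&_). rewrite R1 in H.
  apply Eq; auto.
Qed.
End Ev.

End P6.
Import P6.

Module P7.

Lemma bound_list (l : list nat) : exists k, forall i, In i l -> i < k.
Proof.
  induction l as [|a l [k Hk]]. exists 0; simpl; tauto.
  exists (S (max a k)). intros i [<-|Hi]. lia. specialize (Hk i Hi). lia.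
Qed.

Section Main.
Variables (G : nat -> GrpOps) (A : nat -> Prop) (P : nat -> nat -> Prop).
Hypothesis HG : forall n, is_group (G n).
Hypothesis HPA : forall n i, P n i -> ~ A i.
Hypothesis Hcov : forall i, ~ A i -> exists n, P n i.
Hypothesis Huniq : forall n m i, P n i -> P m i -> n = m.
Hypothesis Hfin : forall n, exists l, forall i, P n i -> In i l.

Definition H := block_prod G P.

Lemma geqG n x y : geq (G n) x y <-> x = y. Proof. apply HG. Qed.
Lemma HWG : forall n, WG (G n). Proof. intros; apply group_WG; auto. Qed.
Lemma Hinv1G : forall n g, geq (G n) (ginv (G n) g) (gone (G n)) -> geq (G n) g (gone (G n)).
Proof.
  intros n g Hg. apply geqG in Hg. apply geqG. rewrite <- (grp_inv_inv _ (HG n) g), Hg. apply grp_inv_one; auto.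
Qed.
Lemma HWH : forall n, WG (H n). Proof. intros n. apply WG_FP. intros; apply HWG. Qed.
Lemma Hinv1H : forall n g, geq (H n) (ginv (H n) g) (gone (H n)) -> geq (H n) g (gone (H n)).
Proof.
  intros n w Hw. simpl in *.
  eapply feq_trans. apply feq_sym. apply (finv_finv _ _ (fun i => HWG _)).
  apply (finv_feq _ _ (fun i => HWG _)) in Hw. exact Hw.
Qed.

Definition blk (i : nat) : nat :=
  match excluded_middle_informative (A i) with
  | left _ => 0
  | right h => proj1_sig (constructive_indefinite_description _ (Hcov i h)) end.
Lemma blkP i : ~ A i -> P (blk i) i.
Proof. intros h. unfold blk. destruct (excluded_middle_informative (A i)) as [a|h']; [tauto|]. apply proj2_sig. Qed.
Lemma blk_eq n i : P n i -> blk i = n.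
Proof. intros Hp. apply (Huniq _ _ i); auto. apply blkP. eapply HPA; eauto. Qed.

Definition thf (a : Letter G) : list (Letter H) :=
  match a with existT _ i g =>
  match excluded_middle_informative (A i) with
  | left _ => []
  | right h => [existT (fun n => gcar (H n)) (blk i)
       [existT (fun j : {j | P (blk i) j} => gcar (G (proj1_sig j))) (exist (P (blk i)) i (blkP i h)) g]]
  end end.

Lemma lev_f m : exists k, forall i, ~ A i -> blk i < m -> i < k.
Proof.
  induction m as [|m [k Hk]]. exists 0; intros; lia.
  destruct (Hfin m) as [l Hl]. destruct (bound_list l) as [k' Hk'].
  exists (max k k'). intros i hA hb. destruct (Nat.eq_dec (blk i) m) as [E|E].
  - specialize (Hk' i (Hl i ltac:(rewrite <- E; apply blkP; auto))). lia.
  - specialize (Hk i hA ltac:(lia)). lia.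
Qed.

Lemma Hlev_f : forall m, exists k, forall a, k <= projT1 a -> forall b, In b (thf a) -> m <= projT1 b.
Proof.
  intros m. destruct (lev_f m) as [k Hk]. exists k. intros [i g] Hi b; simpl in *.
  destruct (excluded_middle_informative (A i)) as [a|h]; simpl; [tauto|].
  intros [<-|[]]; simpl. destruct (le_lt_dec m (blk i)); auto. specialize (Hk i h l). lia.
Qed.

Lemma Hnonid_f : forall a, ~ geq (G (projT1 a)) (projT2 a) (gone _) -> forall b, In b (thf a) -> ~ geq (H (projT1 b)) (projT2 b) (gone _).
Proof.
  intros [i g] Hg b; simpl in *.
  destruct (excluded_middle_informative (A i)) as [a|h]; simpl; [tauto|].
  intros [<-|[]]; simpl. intros Hc. apply Hg.
  apply (single_nonid G HG {j | P (blk i) j} (@proj1_sig _ _) (exist (P (blk i)) i (blkP i h)) g Hc).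
Qed.

Ltac dthf := unfold Fm, thf; simpl; match goal with |- context [excluded_middle_informative ?X] => destruct (excluded_middle_informative X) end;
  simpl; [apply feq_refl|]; match goal with |- context [Compare_dec.lt_dec ?a ?b] => destruct (Compare_dec.lt_dec a b) end; simpl; [|apply feq_refl].

Lemma Hmerge_f : forall m n g h, FE H m (Fm G H thf m (existT _ n (gmul (G n) g h))) (Fm G H thf m (existT _ n g) ++ Fm G H thf m (existT _ n h)).
Proof.
  intros m n g h. dthf.
  eapply feq_trans; [|apply feq_sym; apply (feq_merge1 {i | i < m} (fun i => H (proj1_sig i)))].
  apply feq_repl1. simpl. apply feq_sym. apply (feq_merge1 {j | P (blk n) j} (fun j => G (proj1_sig j))).
Qed.

Lemma Hdel_f : forall m n g, geq (G n) g (gone (G n)) -> FE H m (Fm G H thf m (existT _ n g)) [].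
Proof.
  intros m n g Hg. dthf.
  eapply feq_trans. apply feq_repl1. apply (feq_del1 {j | P (blk n) j} (fun j => G (proj1_sig j))). exact Hg.
  apply feq_del1. apply feq_refl.
Qed.

Lemma Hrepl_f : forall m n g h, geq (G n) g h -> FE H m (Fm G H thf m (existT _ n g)) (Fm G H thf m (existT _ n h)).
Proof. intros m n g h E. apply geqG in E. subst. apply feq_refl. Qed.

Lemma Hinvth_f : forall m a, FE H m (Fm G H thf m (invL a)) (finv _ _ (Fm G H thf m a)).
Proof. intros m [n g]. simpl. dthf. apply feq_refl. Qed.

Definition thg_l n (x : fletter {j | P n j} (fun j => G (proj1_sig j))) : list (Letter G) :=
  match excluded_middle_informative (projT2 x = gone (G (proj1_sig (projT1 x)))) with
  | left _ => [] | right _ => [existT (fun k => gcar (G k)) (proj1_sig (projT1 x)) (projT2 x)] end.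
Definition thg (a : Letter H) : list (Letter G) :=
  match a with existT _ n w => flat_map (thg_l n) w end.

Lemma thg_in n w b : In b (thg (existT _ n w)) -> P n (projT1 b) /\ projT2 b <> gone _.
Proof.
  simpl. intros Hb. apply in_flat_map in Hb as ([[i pi] g] & _ & Hb). unfold thg_l in Hb; simpl in Hb.
  match type of Hb with context [excluded_middle_informative ?X] => destruct (excluded_middle_informative X) as [e|ne] end; simpl in Hb; [tauto|].
  destruct Hb as [<-|[]]; simpl; auto.
Qed.

Lemma Hlev_g : forall m, exists k, forall a, k <= projT1 a -> forall b, In b (thg a) -> m <= projT1 b.
Proof.
  intros m. destruct (bound_list (map blk (seq 0 m))) as [k Hk]. exists k. intros [n w] Hn b Hb; simpl in Hn.
  apply thg_in in Hb as [Hp _]. destruct (le_lt_dec m (projT1 b)) as [|Hlt]; auto. exfalso.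
  assert (blk (projT1 b) < k). { apply Hk, in_map, in_seq. lia. }
  rewrite (blk_eq _ _ Hp) in H0. lia.
Qed.

Lemma Hnonid_g : forall a, ~ geq (H (projT1 a)) (projT2 a) (gone _) -> forall b, In b (thg a) -> ~ geq (G (projT1 b)) (projT2 b) (gone _).
Proof.
  intros [n w] _ b Hb. apply thg_in in Hb as [_ Hb]. rewrite geqG. auto.
Qed.

Definition psi0 m n (x : fletter {j | P n j} (fun j => G (proj1_sig j))) :=
  restr_letter m (existT (fun k => gcar (G k)) (proj1_sig (projT1 x)) (projT2 x)).

Lemma Fm_g_eq m n w : FE G m (Fm H G thg m (existT _ n w)) (flat_map (psi0 m n) w).
Proof.
  unfold Fm; simpl. rewrite flat_map_flat_map. apply flat_map_feq. intros [[i pi] g]. unfold thg_l, psi0; simpl.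
  match goal with |- context [excluded_middle_informative ?X] => destruct (excluded_middle_informative X) as [e|ne] end; simpl.
  - destruct (Compare_dec.lt_dec i m). apply feq_sym, feq_del1. simpl. apply geqG; auto. apply feq_refl.
  - rewrite app_nil_r. apply feq_refl.
Qed.

Lemma psi0_hom m n w w' : fp_eq {j | P n j} (fun j => G (proj1_sig j)) w w' -> FE G m (flat_map (psi0 m n) w) (flat_map (psi0 m n) w').
Proof.
  apply hom_feq; intros [i pi]; unfold psi0; simpl; intros.
  - destruct (Compare_dec.lt_dec i m); simpl. apply feq_sym, (feq_merge1 {i | i < m} (fun i => G (proj1_sig i))). apply feq_refl.
  - destruct (Compare_dec.lt_dec i m); simpl. apply feq_del1; auto. apply feq_refl.
  - apply geqG in H0. subst. apply feq_refl.
Qed.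

Lemma Hmerge_g : forall m n g h, FE G m (Fm H G thg m (existT _ n (gmul (H n) g h))) (Fm H G thg m (existT _ n g) ++ Fm H G thg m (existT _ n h)).
Proof. intros. unfold Fm; simpl. rewrite !flat_map_app. apply feq_refl. Qed.

Lemma Hdel_g : forall m n g, geq (H n) g (gone (H n)) -> FE G m (Fm H G thg m (existT _ n g)) [].
Proof.
  intros m n w Hw. eapply feq_trans. apply Fm_g_eq. apply (psi0_hom m n w []) in Hw. exact Hw.
Qed.

Lemma Hrepl_g : forall m n g h, geq (H n) g h -> FE G m (Fm H G thg m (existT _ n g)) (Fm H G thg m (existT _ n h)).
Proof.
  intros m n w w' Hw. eapply feq_trans. apply Fm_g_eq. eapply feq_trans. apply (psi0_hom m n w w' Hw).
  apply feq_sym, Fm_g_eq.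
Qed.

Lemma Hinvth_g : forall m a, FE G m (Fm H G thg m (invL a)) (finv _ _ (Fm H G thg m a)).
Proof.
  intros m [n w]. simpl. eapply feq_trans. apply Fm_g_eq. eapply feq_trans.
  2: { apply (finv_feq _ _ (fun i => HWG _)). apply feq_sym, Fm_g_eq. }
  rewrite finv_flat_map. rewrite <- map_rev, flat_map_map'. apply flat_map_feq.
  intros [[i pi] g]. unfold psi0; simpl. destruct (Compare_dec.lt_dec i m); apply feq_refl.
Qed.
End Main.

End P7.
Import P7.

Module P8.

Lemma Rw_restr K (v : IWord K) m m' : iw_wf v -> m <= m' ->
  Rw K v m = flat_map (fun a => restr_letter m (existT (fun n => gcar (K n)) (proj1_sig (projT1 a)) (projT2 a))) (Rw K v m').
Proof.
  intros W Hm. pose proof (Rl_spec K v m W) as [S1 M1]. pose proof (Rl_spec K v m' W) as [S2 M2].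
  unfold Rw, restr_word. rewrite flat_map_flat_map.
  rewrite (SS_flat_map _ (ilt v) (wf_irr K v W) (wf_tr K v W) _ (Rl K v m) (Rl K v m')); auto.
  - apply flat_map_ext_in. intros x Hx. apply M2 in Hx. destruct (iw v x) as [n g]; simpl in *.
    destruct (Compare_dec.lt_dec n m'); [|lia]. simpl. rewrite app_nil_r. reflexivity.
  - intros x Hx. apply M2. apply M1 in Hx. lia.
  - intros x _ Hx. apply restr_letter_ge. destruct (le_lt_dec m (projT1 (iw v x))); auto. exfalso; apply Hx, M1; auto.
Qed.

Section Main2.
Variables (G : nat -> GrpOps) (A : nat -> Prop) (P : nat -> nat -> Prop).
Hypothesis HG : forall n, is_group (G n).
Hypothesis HA : exists l : list nat, forall i, A i -> In i l.
Hypothesis HPA : forall n i, P n i -> ~ A i.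
Hypothesis Hcov : forall i, ~ A i -> exists n, P n i.
Hypothesis Huniq : forall n m i, P n i -> P m i -> n = m.
Hypothesis Hfin : forall n, exists l, forall i, P n i -> In i l.

Notation H := (H G P).
Notation thf := (thf G A P Hcov).
Notation thg := (thg G P).
Notation blk := (blk A P Hcov).

Lemma blk_rw n i (pi : P n i) (h : ~ A i) g :
  existT (fun n => gcar (H n)) (blk i)
    [existT (fun j : {j | P (blk i) j} => gcar (G (proj1_sig j))) (exist (P (blk i)) i (blkP A P Hcov i h)) g]
  = existT (fun n => gcar (H n)) n [existT (fun j : {j | P n j} => gcar (G (proj1_sig j))) (exist (P n) i pi) g].
Proof.
  generalize (blkP A P Hcov i h). rewrite (blk_eq A P HPA Hcov Huniq n i pi). intros p.
  rewrite (proof_irrelevance _ p pi). reflexivity.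
Qed.

Lemma comp_x k m n (x : fletter {j | P n j} (fun j => G (proj1_sig j))) :
  (forall a, k <= projT1 a -> forall b, In b (thf a) -> m <= projT1 b) ->
  flat_map (Psi G H thf k m) (flat_map (restr_letter k) (thg_l G P n x)) =
  flat_map (fun _ => restr_letter m (existT (fun n => gcar (H n)) n [x])) (thg_l G P n x).
Proof.
  intros Hk. destruct x as [[i pi] g]. unfold thg_l; simpl.
  match goal with |- context [excluded_middle_informative ?X] => destruct (excluded_middle_informative X) as [e|ne] end;
    simpl; [reflexivity|]. rewrite !app_nil_r.
  destruct (Compare_dec.lt_dec i k) as [l|l]; simpl.
  - rewrite app_nil_r. unfold Psi, Fm, P7.thf; simpl.
    destruct (excluded_middle_informative (A i)) as [a|h]. exfalso; eapply HPA; eauto.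
    rewrite (blk_rw n i pi h). simpl. rewrite app_nil_r. reflexivity.
  - symmetry.
    assert (h : ~ A i) by (eapply HPA; eauto).
    specialize (Hk (existT _ i g) ltac:(simpl; lia)).
    unfold P7.thf in Hk. simpl in Hk. destruct (excluded_middle_informative (A i)) as [a|h']; [tauto|].
    specialize (Hk _ (or_introl eq_refl)). simpl in Hk. rewrite (blk_eq A P HPA Hcov Huniq n i pi) in Hk.
    destruct (Compare_dec.lt_dec n m); [lia|reflexivity].
Qed.

Lemma comp_sum m n w :
  FE H m (flat_map (fun x => flat_map (fun _ => restr_letter m (existT (fun n => gcar (H n)) n [x])) (thg_l G P n x)) w)
         (restr_letter m (existT (fun n => gcar (H n)) n w)).
Proof.
  unfold restr_letter. destruct (Compare_dec.lt_dec n m) as [l|l].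
  - induction w as [|x w IH]; simpl.
    + apply feq_sym, feq_del1. apply feq_refl.
    + unfold thg_l at 1. match goal with |- context [excluded_middle_informative ?X] => destruct (excluded_middle_informative X) as [e|ne] end; simpl.
      * eapply feq_trans. apply IH. apply feq_repl1. simpl. apply feq_sym.
        destruct x as [xi xg]; simpl in e. subst xg.
        pose proof (fp_del {j | P n j} (fun j => G (proj1_sig j)) [] w xi _ (proj2 (geqG G HG _ _ _) eq_refl)) as Hs.
        apply feq_step. exact Hs.
      * eapply feq_trans. apply (feq_app _ _ _ _ _ _ (feq_refl _ _ [existT (fun i : {i : nat | i < m} => gcar (H (proj1_sig i))) (exist (fun i : nat => i < m) n l) [x]]) IH).
        apply (feq_merge1 {i | i < m} (fun i => H (proj1_sig i))).
  - induction w as [|x w IH]; simpl. apply feq_refl.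
    unfold thg_l at 1. match goal with |- context [excluded_middle_informative ?X] => destruct (excluded_middle_informative X) as [e|ne] end; simpl; auto.
Qed.

Definition Lf := Hlev_f G A P Hcov Hfin.
Definition Nf := Hnonid_f G A P HG Hcov.
Definition Lg := Hlev_g G A P HPA Hcov Huniq.
Definition Ng := Hnonid_g G P HG.

Lemma fg_Rweq v : iw_wf v -> Rweq H (subst G H thf (subst H G thg v)) v.
Proof.
  intros W m.
  destruct (Lf m) as [k Hk]. destruct (Lg k) as [k' Hk'].
  set (m' := max m k').
  assert (Wg : iw_wf (subst H G thg v)) by (apply wf_subst; [apply Lg|apply Ng|auto]).
  rewrite (subst_Psi G H thf Lf Nf _ m k Wg Hk).
  rewrite (subst_Psi H G thg Lg Ng _ k m' W).
  2: { intros a Ha. apply Hk'. lia. }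
  rewrite (Rw_restr H v m m' W ltac:(lia)).
  rewrite flat_map_flat_map. apply flat_map_feq. intros [[n pn] w].
  assert (E : flat_map (Psi G H thf k m) (Psi H G thg m' k (existT _ (exist _ n pn) w)) =
     flat_map (fun x => flat_map (fun _ => restr_letter m (existT (fun n => gcar (H n)) n [x])) (thg_l G P n x)) w).
  { unfold Psi at 2, Fm. simpl. rewrite flat_map_flat_map. rewrite flat_map_flat_map.
    apply flat_map_ext. intros x. rewrite <- flat_map_flat_map. exact (comp_x k m n x Hk). }
  rewrite E. apply comp_sum.
Qed.

Lemma thf_nA a j : j < length (thf a) -> ~ A (projT1 a).
Proof.
  destruct a as [i g]; unfold P7.thf; simpl. destruct (excluded_middle_informative (A i)); simpl; [lia|auto].
Qed.
Lemma thf_le1 a j : j < length (thf a) -> j = 0.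
Proof.
  destruct a as [i g]; unfold P7.thf; simpl. destruct (excluded_middle_informative (A i)); simpl; lia.
Qed.
Lemma thf_len1 a : ~ A (projT1 a) -> length (thf a) = 1.
Proof.
  destruct a as [i g]; unfold P7.thf; simpl. destruct (excluded_middle_informative (A i)); simpl; tauto.
Qed.
Lemma thg_le1 a j j' : j' < length (thg (nth j (thf a) (dflt H))) -> j' = 0.
Proof.
  destruct a as [i g]; unfold P7.thf; simpl. destruct (excluded_middle_informative (A i)); simpl.
  - destruct j; simpl; lia.
  - destruct j as [|j]; simpl.
    + unfold thg_l; simpl. match goal with |- context [excluded_middle_informative ?X] => destruct (excluded_middle_informative X) end; simpl; lia.
    + destruct j; simpl; lia.
Qed.
Lemma gf_letter a : ~ A (projT1 a) -> projT2 a <> gone _ -> thg (nth 0 (thf a) (dflt H)) = [a].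
Proof.
  destruct a as [i g]; unfold P7.thf; simpl. intros hA hg. destruct (excluded_middle_informative (A i)); [tauto|].
  simpl. unfold thg_l; simpl. match goal with |- context [excluded_middle_informative ?X] => destruct (excluded_middle_informative X) end; [tauto|].
  reflexivity.
Qed.

Lemma gf_iso u : iw_wf u -> word_iso G (subst H G thg (subst G H thf u)) (sub G u (fun x => ~ A (projT1 (iw u x)))).
Proof.
  intros W.
  exists (fun p => exist (fun x => ~ A (projT1 (iw u x))) (fst (proj1_sig (fst (proj1_sig p)))) (thf_nA _ _ (proj2_sig (fst (proj1_sig p))))).
  split; [|split].
  - intros [[[[x j] h] j'] h'] [[[[y l] hl] l'] hl']. simpl in *.
    assert (j = 0) by (eapply thf_le1; eauto). assert (l = 0) by (eapply thf_le1; eauto).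
    assert (j' = 0) by (eapply thg_le1; eauto). assert (l' = 0) by (eapply thg_le1; eauto). subst.
    split; [intros [[?|[? ?]]|[? ?]]; auto; lia | auto].
  - intros [x hx].
    assert (hg : projT2 (iw u x) <> gone _). { intros E. apply (wf_nonid G u W x). apply geqG; auto. }
    assert (h0 : 0 < length (thf (iw u x))) by (rewrite thf_len1; auto).
    set (r := exist (fun p : iL u * nat => snd p < length (thf (iw u (fst p)))) (x, 0) h0 : iL (subst G H thf u)).
    assert (h0' : 0 < length (thg (iw (subst G H thf u) r))).
    { change (0 < length (thg (nth 0 (thf (iw u x)) (dflt H)))). rewrite gf_letter; simpl; auto. }
    exists (exist (fun p : iL (subst G H thf u) * nat => snd p < length (thg (iw (subst G H thf u) (fst p)))) (r, 0) h0').
    apply sig_ext; reflexivity.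
  - intros [[[[x j] h] j'] h']. simpl in *.
    assert (j = 0) by (eapply thf_le1; eauto). assert (j' = 0) by (eapply thg_le1; eauto). subst.
    rewrite gf_letter. reflexivity. eapply thf_nA; eauto.
    intros E. apply (wf_nonid G u W x). apply geqG; auto.
Qed.

Lemma posA (u : IWord G) : iw_wf u -> exists l, forall x, A (projT1 (iw u x)) -> In x l.
Proof.
  intros W. destruct HA as [la Hla].
  assert (Hgen : forall la, exists l, forall x, In (projT1 (iw u x)) la -> In x l).
  { induction la0 as [|i la0 [l Hl]]. exists []; simpl; tauto.
    destruct (wf_fin G u W i) as [l' Hl']. exists (l' ++ l). intros x [E|Hx]; apply in_app_iff; auto. }
  destruct (Hgen la) as [l Hl]. exists l; auto.
Qed.
End Main2.

End P8.
Import P8.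


Theorem proposition18 (G : nat -> GrpOps) (A : nat -> Prop) (P : nat -> nat -> Prop) :
  (forall n, is_group (G n)) ->
  (exists l : list nat, forall i, A i -> In i l) ->
  (forall n i, P n i -> ~ A i) ->
  (forall i, ~ A i -> exists n, P n i) ->
  (forall n m i, P n i -> P m i -> n = m) ->
  (forall n, exists i, P n i) ->
  (forall n, exists l : list nat, forall i, P n i -> In i l) ->
  arch_iso G (block_prod G P).
Proof.
  intros HG HA HPA Hcov Huniq Hne Hfin.
  change (arch_iso G (P7.H G P)).
  set (thf := P7.thf G A P Hcov). set (thg := P7.thg G P).
  assert (Lf := Lf G A P Hcov Hfin). assert (Nf := Nf G A P HG Hcov).
  assert (Lg := Lg G A P HPA Hcov Huniq). assert (Ng := Ng G P HG).
  assert (HWG := HWG G HG). assert (Hinv1G := Hinv1G G HG).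
  assert (HWH := HWH G P HG). assert (Hinv1H := Hinv1H G P HG).
  assert (WF : forall u, iw_wf u -> iw_wf (subst G (P7.H G P) thf u)) by (intros; apply wf_subst; auto).
  assert (WGg : forall v, iw_wf v -> iw_wf (subst (P7.H G P) G thg v)) by (intros; apply wf_subst; auto).
  exists (subst G (P7.H G P) thf). split; [|split; [|split]].
  - exact WF.
  - intros u v Wu Wv. split.
    + apply (arch_subst G (P7.H G P) thf Lf Nf Hinv1G Hinv1H (Hmerge_f G A P Hcov) (Hdel_f G A P Hcov)
        (Hrepl_f G A P HG Hcov) (Hinvth_f G A P Hcov)); auto.
    + intros Hf.
      apply (arch_subst (P7.H G P) G thg Lg Ng Hinv1H Hinv1G (Hmerge_g G P) (Hdel_g G P HG)
        (Hrepl_g G P HG) (Hinvth_g G P HG)) in Hf; auto.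
      set (Su := fun x : iL u => ~ A (projT1 (iw u x))). set (Sv := fun x : iL v => ~ A (projT1 (iw v x))).
      assert (Wsu : iw_wf (sub G u Su)) by (apply wf_sub; auto).
      assert (Wsv : iw_wf (sub G v Sv)) by (apply wf_sub; auto).
      assert (E : arch_eq (sub G u Su) (sub G v Sv)).
      { apply (arch_Rweq G HWG Hinv1G _ _ _ _ Wsu Wsv (WGg _ (WF _ Wu)) (WGg _ (WF _ Wv))); auto.
        intros m. rewrite (iso_Rw G _ _ m (WGg _ (WF _ Wu)) Wsu (gf_iso G A P HG Hcov u Wu)). apply feq_refl.
        intros m. rewrite (iso_Rw G _ _ m (WGg _ (WF _ Wv)) Wsv (gf_iso G A P HG Hcov v Wv)). apply feq_refl. }
      assert (Du : arch_eq u (sub G u Su)).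
      { destruct (posA G A HA u Wu) as [l Hl]. apply (DelList G HWG Hinv1G u l); auto.
        intros x Hx. apply Hl. apply NNPP. exact Hx. }
      assert (Dv : arch_eq v (sub G v Sv)).
      { destruct (posA G A HA v Wv) as [l Hl]. apply (DelList G HWG Hinv1G v l); auto.
        intros x Hx. apply Hl. apply NNPP. exact Hx. }
      apply (arch_trans G HWG Hinv1G _ (sub G u Su)); auto.
      apply (arch_trans G HWG Hinv1G _ (sub G v Sv)); auto.
      apply (arch_sym G HWG Hinv1G); auto.
  - intros u v Wu Wv. apply (arch_of_Rweq _ HWH Hinv1H).
    apply WF, wf_mul; auto. apply wf_mul; auto.
    apply (subst_mul G (P7.H G P) thf Lf Nf); auto.
  - intros v Wv. exists (subst (P7.H G P) G thg v). split; auto.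
    apply (arch_of_Rweq _ HWH Hinv1H); auto.
    apply (fg_Rweq G A P HG HPA Hcov Huniq Hfin); auto.
Qed.
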